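(* Let $(H,+,\circ)$ be a commutative multiplicative hyperring with identity $1$, and let $P$ be a nonzero sdf-absorbing $\mathcal{C}$-hyperideal of $H$. Then $\mathrm{rad}(P)=P$.
   Context: A commutative multiplicative hyperring $(H,+,\circ)$ consists of an abelian group $(H,+)$ and a hyperoperation $\circ: H\times H\to P^*(H)$ (nonempty subsets) which is associative ($\bigcup_{a\in y\circ z}x\circ a=\bigcup_{b\in x\circ y}b\circ z$), commutative, satisfies $x\circ(y+z)\subseteq x\circ y+x\circ z$ and $x\circ(-y)=-(x\circ y)=(-x)\circ y$. For subsets $A,B$, $A\circ B=\bigcup_{a\in A,b\in B}a\circ b$ and $A\pm B=\{a\pm b: a\in A,b\in B\}$; $x^n=x\circ\cdots\circ x$ ($n$ factors). An identity $1$ satisfies $x\in x\circ 1$ for all $x$. A hyperideal is a nonempty $P\subseteq H$ with $x-y\in P$ and $r\circ x\subseteq P$ for all $x,y\in P$, $r\in H$. A proper hyperideal $P$ is prime if $x\circ y\subseteq P$ implies $x\in P$ or $y\in P$; $\mathrm{rad}(P)$ is the intersection of all prime hyperideals containing $P$ ($\mathrm{rad}(P)=H$ if there are none). Let $\mathcal{C}=\{c_1\circ\cdots\circ c_n: c_i\in H, n\in\mathbb{N}\}$; a hyperideal $P$ is a $\mathcal{C}$-hyperideal if for every $C\in\mathcal{C}$, $C\cap P\neq\varnothing$ implies $C\subseteq P$. A proper hyperideal $P$ is sdf-absorbing if whenever $0\neq x,y\in H$ and $x^2-y^2\subseteq P$, then $x-y\in P$ or $x+y\in P$. *)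

(* Defs.v *)
From HB Require Import structures.
From mathcomp Require Import all_boot all_algebra.
Set Implicit Arguments. Unset Strict Implicit. Unset Printing Implicit Defensive.
Import GRing.Theory.
Local Open Scope ring_scope.

(* A hyperoperation on a zmodType H is encoded as a ternary relation:
   hm x y z  <->  z \in x o y.  Subsets of H are predicates H -> Prop. *)
Section Hyperring.
Variable H : zmodType.
Variable hm : H -> H -> H -> Prop.

Definition is_comm_mult_hyperring : Prop :=
  (forall x y, exists z, hm x y z) /\
  (* associativity: U_{a in y o z} x o a = U_{b in x o y} b o z *)
  (forall x y z w, (exists a, hm y z a /\ hm x a w) <->
                   (exists b, hm x y b /\ hm b z w)) /\
  (forall x y w, hm x y w <-> hm y x w) /\
  (forall x y z w, hm x (y + z) w ->
     exists u v, hm x y u /\ hm x z v /\ w = u + v) /\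
  (forall x y w, hm x (- y) w <-> hm x y (- w)) /\
  (forall x y w, hm (- x) y w <-> hm x y (- w)).

Definition is_identity (one : H) : Prop := forall x, hm x one x.

Definition is_hyperideal (P : H -> Prop) : Prop :=
  (exists x, P x) /\
  (forall x y, P x -> P y -> P (x - y)) /\
  (forall r x w, P x -> hm r x w -> P w).

Definition is_proper_hyperideal (P : H -> Prop) : Prop :=
  is_hyperideal P /\ exists x, ~ P x.

Definition is_prime_hyperideal (P : H -> Prop) : Prop :=
  is_proper_hyperideal P /\
  (forall x y, (forall w, hm x y w -> P w) -> P x \/ P y).

(* rad(P): intersection of all prime hyperideals containing P
   (equal to H when there are none). *)
Definition hrad (P : H -> Prop) : H -> Prop :=
  fun x => forall Q, is_prime_hyperideal Q -> (forall y, P y -> Q y) -> Q x.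

Definition hsetmul (A B : H -> Prop) : H -> Prop :=
  fun w => exists a b, A a /\ B b /\ hm a b w.

(* c_1 o c_2 o ... o c_n  with c_1 = c and [c_2; ...; c_n] = cs  (n >= 1) *)
Fixpoint hprod (c : H) (cs : seq H) : H -> Prop :=
  match cs with
  | [::] => fun w => w = c
  | d :: ds => hsetmul (fun w => w = c) (hprod d ds)
  end.

(* C-hyperideal: for every C in the class of finite hyperproducts,
   C meets P implies C \subseteq P *)
Definition is_C_hyperideal (P : H -> Prop) : Prop :=
  is_hyperideal P /\
  (forall c cs, (exists z, hprod c cs z /\ P z) ->
                forall z, hprod c cs z -> P z).

(* sdf-absorbing: for nonzero x, y, x^2 - y^2 \subseteq P implies
   x - y \in P or x + y \in P *)
Definition is_sdf_absorbing (P : H -> Prop) : Prop :=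
  is_proper_hyperideal P /\
  (forall x y, x != 0 -> y != 0 ->
     (forall a b, hm x x a -> hm y y b -> P (a - b)) ->
     P (x - y) \/ P (x + y)).

End Hyperring.

(* Main.v *)
Require Import Defs.
From mathcomp Require Import all_boot all_algebra.
From mathcomp Require Import classical_sets.
From Stdlib Require Import Classical.
Set Implicit Arguments. Unset Strict Implicit.
Import GRing.Theory.
Local Open Scope ring_scope.

Lemma hi_zero (H : zmodType) (hm : H -> H -> H -> Prop) (P : H -> Prop) :
  is_hyperideal hm P -> P 0.
Proof. move=> [[z Pz] [Hs _]]; by have := Hs z z Pz Pz; rewrite subrr. Qed.

Lemma hi_opp (H : zmodType) (hm : H -> H -> H -> Prop) (P : H -> Prop) a :
  is_hyperideal hm P -> P a -> P (- a).
Proof.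
move=> hP Pa; have := (proj1 (proj2 hP)) 0 a (hi_zero hP) Pa; by rewrite sub0r.
Qed.

Lemma hi_add (H : zmodType) (hm : H -> H -> H -> Prop) (P : H -> Prop) a b :
  is_hyperideal hm P -> P a -> P b -> P (a + b).
Proof.
move=> hP Pa Pb; have := (proj1 (proj2 hP)) a (- b) Pa (hi_opp hP Pb).
by rewrite opprK.
Qed.

Definition pw (H : zmodType) (hm : H -> H -> H -> Prop) (x : H) (n : nat) :=
  hprod hm x (nseq n x).

Lemma pwS (H : zmodType) (hm : H -> H -> H -> Prop) x n z :
  pw hm x n.+1 z <-> exists b, pw hm x n b /\ hm x b z.
Proof.
rewrite /pw /=; split.
- by move=> [a [b [-> [Hb Hm]]]]; exists b.
- by move=> [b [Hb Hm]]; exists x, b.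
Qed.

Lemma pw0 (H : zmodType) (hm : H -> H -> H -> Prop) x z :
  pw hm x 0 z <-> z = x.
Proof. by []. Qed.

Lemma pw_ne (H : zmodType) (hm : H -> H -> H -> Prop) x n :
  is_comm_mult_hyperring hm -> exists z, pw hm x n z.
Proof.
move=> [hne _]; elim: n => [|n [b Hb]]; first by exists x.
have [z Hz] := hne x b; exists z; apply/pwS; by exists b.
Qed.

Lemma pw_mul (H : zmodType) (hm : H -> H -> H -> Prop) x :
  is_comm_mult_hyperring hm -> forall n m s t w,
  pw hm x n s -> pw hm x m t -> hm s t w -> pw hm x (n + m)%N.+1 w.
Proof.
move=> [hne [hass _]]; elim=> [|n IH] m s t w.
- move=> /pw0 -> Ht Hw; apply/pwS; by exists t.
- move=> /pwS [s' [Hs' Hxs]] Ht Hw.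
  have [a [Ha Hxa]] : exists a, hm s' t a /\ hm x a w.
    apply/hass; by exists s.
  rewrite addSn; apply/pwS; exists a; split=> //; exact: IH Hs' Ht Ha.
Qed.

(* the hyperideal generated by Q and a *)
Inductive J (H : zmodType) (hm : H -> H -> H -> Prop) (Q : H -> Prop) (a : H)
  : H -> Prop :=
| J_Q q : Q q -> J hm Q a q
| J_add z r e : J hm Q a z -> hm r a e -> J hm Q a (z + e).

Lemma J_sub (H : zmodType) (hm : H -> H -> H -> Prop) Q a :
  is_comm_mult_hyperring hm -> is_hyperideal hm Q ->
  forall z1 z2, J hm Q a z1 -> J hm Q a z2 -> J hm Q a (z1 - z2).
Proof.
move=> [_ [_ [_ [_ [_ hnegl]]]]] hQ z1 z2 H1 H2; elim: H2 => [q Qq|z r e Hz IH He].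
- elim: H1 => [q' Qq'|z r e Hz IH He].
  + apply: J_Q; exact: (proj1 (proj2 hQ)).
  + have -> : z + e - q = (z - q) + e by rewrite addrAC.
    exact: J_add IH He.
- have -> : z1 - (z + e) = (z1 - z) + (- e) by rewrite opprD addrA.
  apply: (J_add (r := - r)) IH _; apply/hnegl; by rewrite opprK.
Qed.

Lemma J_abs (H : zmodType) (hm : H -> H -> H -> Prop) Q a :
  is_comm_mult_hyperring hm -> is_hyperideal hm Q ->
  forall y z w, J hm Q a z -> hm y z w -> J hm Q a w.
Proof.
move=> [_ [hass [_ [hdis _]]]] hQ y z w Hz; elim: Hz w => [q Qq|z' r e Hz IH He] w Hw.
- apply: J_Q; exact: (proj2 (proj2 hQ)) Qq Hw.
- have [u [v [Hu [Hv ->]]]] := hdis _ _ _ _ Hw.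
  have [c [Hc Hcv]] : exists c, hm y r c /\ hm c a v.
    apply/hass; by exists e.
  exact: J_add (IH _ Hu) Hcv.
Qed.

Lemma J_prod (H : zmodType) (hm : H -> H -> H -> Prop) Q a :
  is_comm_mult_hyperring hm -> is_hyperideal hm Q ->
  forall y, (forall w, hm a y w -> Q w) ->
  forall z, J hm Q a z -> forall w, hm z y w -> Q w.
Proof.
move=> [_ [hass [hcom [hdis _]]]] hQ y Hay z Hz; elim: Hz => [q Qq|z' r e Hz IH He] w Hw.
- apply: ((proj2 (proj2 hQ)) y q w Qq); exact/hcom.
- move/hcom: Hw => Hw.
  have [u [v [Hu [Hv ->]]]] := hdis _ _ _ _ Hw.
  apply: (hi_add hQ); first by apply: IH; exact/hcom.
  have [c [Hc Hcv]] : exists c, hm y r c /\ hm c a v.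
    apply/hass; by exists e.
  have [d [Hd Hdv]] : exists d, hm y a d /\ hm r d v.
    apply/hass; exists c; split=> //; exact/hcom.
  apply: (proj2 (proj2 hQ)) _ _ _ _ Hdv; apply: Hay; exact/hcom.
Qed.

Definition Fam (H : zmodType) (hm : H -> H -> H -> Prop) (P S : H -> Prop)
  (A : H -> Prop) : Prop :=
  (forall z, ~ A z) \/
  (is_hyperideal hm A /\ (forall y, P y -> A y) /\ (forall z, S z -> ~ A z)).

Lemma Fam_ne (H : zmodType) (hm : H -> H -> H -> Prop) (P S A : H -> Prop) z :
  Fam hm P S A -> A z ->
  is_hyperideal hm A /\ (forall y, P y -> A y) /\ (forall z, S z -> ~ A z).
Proof. by case=> [h|//] Az; case: (h z Az). Qed.

Lemma exists_prime (H : zmodType) (hm : H -> H -> H -> Prop) (one : H)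
  (P S : H -> Prop) x0 :
  is_comm_mult_hyperring hm -> is_identity hm one -> is_hyperideal hm P ->
  (forall z, S z -> ~ P z) -> S x0 ->
  (forall s t w, S s -> S t -> hm s t w -> S w) ->
  exists Q, is_prime_hyperideal hm Q /\ (forall y, P y -> Q y) /\
            (forall z, S z -> ~ Q z).
Proof.
move=> hr hid hP SP Sx0 Smul.
have hr' := hr; move: hr' => [hne [hass [hcom [hdis _]]]].
have [A [FA Amax]] : exists A, Fam hm P S A /\
    forall B, proper A B -> ~ Fam hm P S B.
  apply: Zorn_bigcup => F FF Ftot.
  case: (classic (exists X z, F X /\ X z)) => [[X0 [z0 [FX0 X0z0]]]|hno]; last first.
    left=> z [X FX Xz]; apply: hno; by exists X, z.
  have [hX0 [PX0 SX0]] := Fam_ne (FF _ FX0) X0z0.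
  right; split; [split; [|split]|split].
  - by exists z0; exists X0.
  - move=> z1 z2 [X1 FX1 X1z] [X2 FX2 X2z].
    have [h1 _] := Fam_ne (FF _ FX1) X1z.
    have [h2 _] := Fam_ne (FF _ FX2) X2z.
    case: (Ftot _ _ FX1 FX2) => sub.
    + exists X2 => //; apply: (proj1 (proj2 h2)) => //; exact: sub.
    + exists X1 => //; apply: (proj1 (proj2 h1)) => //; exact: sub.
  - move=> r z w [X FX Xz] Hw; exists X => //.
    have [h _] := Fam_ne (FF _ FX) Xz; exact: (proj2 (proj2 h)) Xz Hw.
  - move=> y Py; exists X0 => //; exact: PX0.
  - move=> z Sz [X FX Xz]; have [_ [_ h]] := Fam_ne (FF _ FX) Xz; exact: h z Sz Xz.
have [hA [PA SA]] : is_hyperideal hm A /\ (forall y, P y -> A y) /\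
    (forall z, S z -> ~ A z).
  case: FA => [Aemp|//]; exfalso; apply: (Amax P).
  - split; first by move=> z /Aemp.
    move=> h; have [z Pz] := proj1 hP; exact: Aemp z (h z Pz).
  - by right.
exists A; split; last by split.
split; first by split=> //; exists x0; exact: SA.
move=> a b Hab.
case: (classic (A a)) => [|nAa]; first by left.
case: (classic (A b)) => [|nAb]; first by right.
exfalso.
have Jgen : forall c, ~ A c -> exists s, S s /\ J hm A c s.
  move=> c nAc; apply: NNPP => hn.
  have FJ : Fam hm P S (J hm A c).
    right; split; [split; [|split]|split].
    - by exists 0; apply: J_Q; exact: hi_zero hA.
    - exact: J_sub.
    - move=> r z w Hz Hw; exact: J_abs Hz Hw.
    - by move=> y Py; apply: J_Q; exact: PA.
    - move=> z Sz Jz; apply: hn; by exists z.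
  apply: (Amax _ _ FJ); split; first by move=> z Az; exact: J_Q.
  move=> hJA; apply: nAc; apply: hJA.
  have := J_add (J_Q hm c (hi_zero hA)) (proj1 (hcom c one c) (hid c)).
  by rewrite add0r.
have [s [Ss Js]] := Jgen a nAa.
have [t [St Jt]] := Jgen b nAb.
have [w Hw] := hne s t.
have h1 : forall w, hm s b w -> A w := J_prod hr hA Hab Js.
have h2 : forall w, hm b s w -> A w by move=> w' /hcom; exact: h1.
have h3 := J_prod hr hA h2 Jt.
apply: (SA w (Smul _ _ _ Ss St Hw)); apply: h3; exact/hcom.
Qed.

Lemma rad_pw (H : zmodType) (hm : H -> H -> H -> Prop) (P : H -> Prop) x :
  is_comm_mult_hyperring hm -> (exists p, P p /\ p != 0) ->
  is_sdf_absorbing hm P -> is_C_hyperideal hm P ->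
  forall n z, pw hm x n z -> P z -> P x.
Proof.
move=> hr [p0 [Pp0 p0n]] [_ hsdf] [hP hC].
have hr' := hr; move: hr' => [hne [hass [hcom _]]].
elim=> [|k IH] z; first by move=> /pw0 ->.
move=> Hz Pz.
have Hall1 : forall w, pw hm x k.+1 w -> P w.
  move=> w; apply: (hC x (nseq k.+1 x)); by exists z.
have Hall2 : forall w, pw hm x (k + k)%N.+1 w -> P w.
  case: k IH Hz Hall1 => [|j] IH Hz Hall1; first exact: Hall1.
  have [t Ht] := pw_ne x j hr.
  have [s Hs] := pw_ne x j.+2 hr.
  have [w0 Hw0] := hne s t.
  have Hpw : pw hm x (j.+1 + j.+1)%N.+1 w0.
    have E : (j.+2 + j = j.+1 + j.+1)%N by rewrite addSn addnS.
    have := pw_mul hr Hs Ht Hw0; by rewrite E.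
  move=> w Hw; apply: (hC x (nseq (j.+1 + j.+1)%N.+1 x) _ w Hw); exists w0; split=> //.
  apply: ((proj2 (proj2 hP)) t s w0 (Hall1 _ Hs)); exact/hcom.
have [u Hu] := pw_ne x k hr.
apply: (IH u Hu).
case: (eqVneq u 0) => [->|un0]; first exact: hi_zero hP.
have Hsq : forall a b, hm u u a -> hm p0 p0 b -> P (a - b).
  move=> a b Ha Hb; apply: (proj1 (proj2 hP)).
  - exact: Hall2 (pw_mul hr Hu Hu Ha).
  - exact: (proj2 (proj2 hP)) Pp0 Hb.
case: (hsdf u p0 un0 p0n Hsq) => h.
- have := hi_add hP h Pp0; by rewrite subrK.
- have := (proj1 (proj2 hP)) _ _ h Pp0; by rewrite addrK.
Qed.

Theorem mainTheorem1 (H : zmodType) (hm : H -> H -> H -> Prop) (one : H)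
  (P : H -> Prop) :
  is_comm_mult_hyperring hm ->
  is_identity hm one ->
  (exists x, P x /\ x != 0) ->
  is_sdf_absorbing hm P ->
  is_C_hyperideal hm P ->
  forall x, hrad hm P x <-> P x.
Proof.
move=> hr hid hnz hsdf hC x; split; last by move=> Px Q _ PQ; exact: PQ.
move=> hx; apply: NNPP => nPx.
have [Q [pQ [PQ SQ]]] : exists Q, is_prime_hyperideal hm Q /\ (forall y, P y -> Q y) /\
    (forall z, (exists n, pw hm x n z) -> ~ Q z).
  apply: (@exists_prime H hm one P (fun z => exists n, pw hm x n z) x hr hid (proj1 hC)).
  - move=> z [n Hz] Pz; exact: nPx (rad_pw hr hnz hsdf hC Hz Pz).
  - by exists 0%N.
  - move=> s t w [n Hs] [m Ht] Hw; exists (n + m)%N.+1; exact: (pw_mul hr Hs Ht Hw).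
apply: (SQ x); first by exists 0%N.
exact: hx Q pQ PQ.
Qed.
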